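(* Let $(X,d)$ be a metric space, $x_0\in X$, $n\geq 1$. For all $a,b,c\in\pi_n(X,x_0)$, $\rho(a,b)=\rho(ac,bc)=\rho(ca,cb)$.
   Context: $\Omega^n(X,x_0)$ is the set of continuous maps $\alpha:[0,1]^n\to X$ with $\alpha(\partial[0,1]^n)=\{x_0\}$, with uniform metric $\mu(\alpha,\beta)=\sup_{t\in[0,1]^n}d(\alpha(t),\beta(t))$. For $a,b\in\pi_n(X,x_0)$, $\rho(a,b)=\inf\{\mu(\alpha,\beta)\mid\alpha\in a,\beta\in b\}$. *)

(* Defs.v *)
From Stdlib Require Import Reals.
From Coquelicot Require Import Coquelicot.
From mathcomp Require Import ssreflect ssrfun ssrbool eqtype ssrnat fintype.

Set Implicit Arguments.
Unset Strict Implicit.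

Local Open Scope R_scope.

Definition is_metric (X : Type) (d : X -> X -> R) : Prop :=
  (forall x y, 0 <= d x y) /\
  (forall x y, d x y = 0 <-> x = y) /\
  (forall x y, d x y = d y x) /\
  (forall x y z, d x z <= d x y + d y z).

Definition cube (n : nat) (t : 'I_n -> R) : Prop :=
  forall i, 0 <= t i <= 1.

Definition boundary (n : nat) (t : 'I_n -> R) : Prop :=
  cube t /\ exists i, t i = 0 \/ t i = 1.

(* continuity of alpha restricted to the cube (Euclidean topology,
   expressed with the equivalent max-norm) *)
Definition cont_on_cube (X : Type) (d : X -> X -> R) (n : nat)
  (alpha : ('I_n -> R) -> X) : Prop :=
  forall t, cube t -> forall eps, 0 < eps -> exists delta, 0 < delta /\
    forall s, cube s -> (forall i, Rabs (s i - t i) < delta) ->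
      d (alpha s) (alpha t) < eps.

Definition Omega (X : Type) (d : X -> X -> R) (x0 : X) (n : nat)
  (alpha : ('I_n -> R) -> X) : Prop :=
  cont_on_cube d alpha /\ (forall t, boundary t -> alpha t = x0).

Definition homotopic (X : Type) (d : X -> X -> R) (x0 : X) (n : nat)
  (alpha beta : ('I_n -> R) -> X) : Prop :=
  exists H : R -> ('I_n -> R) -> X,
    (forall u t, 0 <= u <= 1 -> cube t -> forall eps, 0 < eps ->
       exists delta, 0 < delta /\
       forall u' s, 0 <= u' <= 1 -> cube s -> Rabs (u' - u) < delta ->
         (forall i, Rabs (s i - t i) < delta) ->
         d (H u' s) (H u t) < eps) /\
    (forall t, cube t -> H 0 t = alpha t) /\
    (forall t, cube t -> H 1 t = beta t) /\
    (forall u t, 0 <= u <= 1 -> boundary t -> H u t = x0).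

(* uniform metric mu(alpha,beta) = sup_{t in [0,1]^n} d(alpha t, beta t)
   (finite for elements of Omega^n by compactness) *)
Definition mu (X : Type) (d : X -> X -> R) (n : nat)
  (alpha beta : ('I_n -> R) -> X) : R :=
  real (Lub_Rbar (fun r => exists t, cube t /\ r = d (alpha t) (beta t))).

Definition rho (X : Type) (d : X -> X -> R) (x0 : X) (n : nat)
  (alpha beta : ('I_n -> R) -> X) : Rbar :=
  Glb_Rbar (fun r => exists alpha' beta',
    Omega d x0 alpha' /\ Omega d x0 beta' /\
    homotopic d x0 alpha' alpha /\ homotopic d x0 beta' beta /\
    r = mu d alpha' beta').

Definition concat (X : Type) (n : nat) (i0 : 'I_n)
  (alpha gamma : ('I_n -> R) -> X) : ('I_n -> R) -> X :=
  fun t =>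
    if Rle_dec (t i0) (1/2) then alpha (fun i => if i == i0 then 2 * t i else t i)
    else gamma (fun i => if i == i0 then 2 * t i - 1 else t i).

(* Main.v *)
Require Import Defs.
From Stdlib Require Import Reals Lra FunctionalExtensionality.
From Coquelicot Require Import Coquelicot.
From mathcomp Require Import ssreflect ssrfun ssrbool eqtype ssrnat fintype.

Local Open Scope R_scope.
Set Bullet Behavior "Strict Subproofs".

Definition HC {X : Type} (d : X -> X -> R) {n : nat} (F : R -> ('I_n -> R) -> X) : Prop :=
  forall u t, 0 <= u <= 1 -> cube t -> forall eps, 0 < eps ->
       exists delta, 0 < delta /\
       forall u' s, 0 <= u' <= 1 -> cube s -> Rabs (u' - u) < delta ->
         (forall i, Rabs (s i - t i) < delta) ->
         d (F u' s) (F u t) < eps.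

Definition clamp (x : R) : R := Rmax 0 (Rmin 1 x).

Lemma clamp_rng x : 0 <= clamp x <= 1.
Proof. unfold clamp, Rmax, Rmin; repeat destruct Rle_dec; lra. Qed.
Lemma clamp_id x : 0 <= x <= 1 -> clamp x = x.
Proof. unfold clamp, Rmax, Rmin; repeat destruct Rle_dec; lra. Qed.
Lemma clamp_0 x : x <= 0 -> clamp x = 0.
Proof. unfold clamp, Rmax, Rmin; repeat destruct Rle_dec; lra. Qed.
Lemma clamp_1 x : 1 <= x -> clamp x = 1.
Proof. unfold clamp, Rmax, Rmin; repeat destruct Rle_dec; lra. Qed.
Lemma clamp_lip x y k : Rabs (x - y) < k -> Rabs (clamp x - clamp y) < k.
Proof. unfold clamp, Rmax, Rmin; repeat destruct Rle_dec; split_Rabs; lra. Qed.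
Lemma min_lip a b c e k : Rabs (a - c) < k -> Rabs (b - e) < k -> Rabs (Rmin a b - Rmin c e) < k.
Proof. unfold Rmin; repeat destruct Rle_dec; split_Rabs; lra. Qed.
Lemma max_lip a b c e k : Rabs (a - c) < k -> Rabs (b - e) < k -> Rabs (Rmax a b - Rmax c e) < k.
Proof. unfold Rmax; repeat destruct Rle_dec; split_Rabs; lra. Qed.
Lemma prod_lip s s' u u' k : 0 <= s <= 1 -> 0 <= s' <= 1 -> 0 <= u <= 1 -> 0 <= u' <= 1 ->
  Rabs (s' - s) < k -> Rabs (u' - u) < k ->
  Rabs (s' * (4 - 3 * u') - s * (4 - 3 * u)) < 7 * k.
Proof.
  intros. have E : s' * (4 - 3 * u') - s * (4 - 3 * u) = (s' - s) * (4 - 3 * u') + (3 * s) * (u - u') by ring.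
  rewrite E. apply: Rle_lt_trans; first by apply Rabs_triang.
  rewrite !Rabs_mult (Rabs_right (4 - 3*u')); last lra.
  rewrite (Rabs_right 3); last lra. rewrite (Rabs_right s); last lra.
  rewrite (Rabs_minus_sym u u').
  have hk := Rabs_pos (s' - s).
  have hk' := Rabs_pos (u' - u).
  have h1 : Rabs (s' - s) * (4 - 3 * u') < k * 4 by nra.
  have h2 : 3 * s * Rabs (u' - u) <= 3 * k by nra.
  lra.
Qed.

Lemma d_refl {X} {d : X -> X -> R} (hd : is_metric d) x : d x x = 0.
Proof. destruct hd as [_ [h _]]. by apply h. Qed.
Lemma d_sym {X} {d : X -> X -> R} (hd : is_metric d) x y : d x y = d y x.
Proof. destruct hd as [_ [_ [h _]]]. by apply h. Qed.
Lemma d_tri {X} {d : X -> X -> R} (hd : is_metric d) x y z : d x z <= d x y + d y z.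
Proof. destruct hd as [_ [_ [_ h]]]. by apply h. Qed.
Lemma d_pos {X} {d : X -> X -> R} (hd : is_metric d) x y : 0 <= d x y.
Proof. destruct hd as [h _]. by apply h. Qed.

Lemma HC_ext {X} (d : X -> X -> R) n (F G : R -> ('I_n -> R) -> X) :
  (forall u t, 0 <= u <= 1 -> cube t -> F u t = G u t) -> HC d F -> HC d G.
Proof.
  move=> E hF u t hu ht eps he. have [delta [hd hh]] := hF u t hu ht eps he.
  exists delta; split => // u' s hu' hs h1 h2. rewrite -!E //. by apply hh.
Qed.

Lemma HC_const {X} (d : X -> X -> R) (hd : is_metric d) n (x : X) :
  HC d (fun (_ : R) (_ : 'I_n -> R) => x).
Proof.
  move=> u t _ _ eps he. exists 1; split; first lra. move=> *. rewrite d_refl //.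
Qed.

Lemma HC_lift {X} (d : X -> X -> R) n (a : ('I_n -> R) -> X) :
  cont_on_cube d a -> HC d (fun _ t => a t).
Proof.
  move=> ha u t hu ht eps he. have [delta [hd hh]] := ha t ht eps he.
  exists delta; split => // u' s hu' hs h1 h2. by apply hh.
Qed.

Lemma HC_at {X} (d : X -> X -> R) n (F : R -> ('I_n -> R) -> X) u :
  0 <= u <= 1 -> HC d F -> cont_on_cube d (F u).
Proof.
  move=> hu hF t ht eps he. have [delta [hd hh]] := hF u t hu ht eps he.
  exists delta; split => // s hs h. apply hh => //. rewrite Rminus_eq_0 Rabs_R0 //.
Qed.

Lemma HC_end {X} (d : X -> X -> R) n (F : R -> ('I_n -> R) -> X) u :
  0 <= u <= 1 -> HC d F -> HC d (fun _ t => F u t).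
Proof. move=> hu hF. apply: HC_lift. by apply HC_at. Qed.

Lemma HC_comp {X} (d : X -> X -> R) n (F : R -> ('I_n -> R) -> X)
  (pu : R -> ('I_n -> R) -> R) (pt : R -> ('I_n -> R) -> ('I_n -> R)) L :
  0 < L -> HC d F ->
  (forall u t, 0 <= u <= 1 -> cube t -> 0 <= pu u t <= 1 /\ cube (pt u t)) ->
  (forall k u t u' s, 0 < k -> 0 <= u <= 1 -> cube t -> 0 <= u' <= 1 -> cube s ->
     Rabs (u' - u) < k -> (forall i, Rabs (s i - t i) < k) ->
     Rabs (pu u' s - pu u t) < L * k /\ forall i, Rabs (pt u' s i - pt u t i) < L * k) ->
  HC d (fun u t => F (pu u t) (pt u t)).
Proof.
  move=> hL hF hdom hlip u t hu ht eps he.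
  have [h1 h2] := hdom u t hu ht.
  have [delta [hdl hh]] := hF _ _ h1 h2 eps he.
  exists (delta / L); split; first by apply Rdiv_lt_0_compat.
  move=> u' s hu' hs k1 k2.
  have [h3 h4] := hdom u' s hu' hs.
  have [l1 l2] := hlip (delta / L) u t u' s (Rdiv_lt_0_compat _ _ hdl hL) hu ht hu' hs k1 k2.
  have E : L * (delta / L) = delta by field; lra.
  rewrite E in l1 l2. by apply hh.
Qed.

Lemma glue {X} (d : X -> X -> R) (hd : is_metric d) n (p q : R -> ('I_n -> R) -> R)
  (G1 G2 K : R -> ('I_n -> R) -> X) :
  HC d G1 -> HC d G2 -> HC d K ->
  (forall u t, 0 <= u <= 1 -> cube t -> q u t <= p u t -> G1 u t = K u t) ->
  (forall u t, 0 <= u <= 1 -> cube t -> p u t <= q u t -> G2 u t = K u t) ->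
  HC d (fun u t => if Rle_dec (p u t) (q u t) then G1 u t else G2 u t).
Proof.
  move=> h1 h2 hK e1 e2 u t hu ht eps he.
  have he5 : 0 < eps / 5 by lra.
  have [d1 [hd1 k1]] := h1 u t hu ht _ he5.
  have [d2 [hd2 k2]] := h2 u t hu ht _ he5.
  have [d3 [hd3 k3]] := hK u t hu ht _ he5.
  exists (Rmin d1 (Rmin d2 d3)); split.
  { apply Rmin_pos => //. by apply Rmin_pos. }
  move=> u' s hu' hs l1 l2.
  have m1 : Rmin d1 (Rmin d2 d3) <= d1 by apply Rmin_l.
  have m2 : Rmin d1 (Rmin d2 d3) <= d2.
  { apply: Rle_trans; first by apply Rmin_r. apply Rmin_l. }
  have m3 : Rmin d1 (Rmin d2 d3) <= d3.
  { apply: Rle_trans; first by apply Rmin_r. apply Rmin_r. }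
  have a1 : d (G1 u' s) (G1 u t) < eps / 5.
  { apply k1 => //; try lra. move=> i; have := l2 i; lra. }
  have a2 : d (G2 u' s) (G2 u t) < eps / 5.
  { apply k2 => //; try lra. move=> i; have := l2 i; lra. }
  have a3 : d (K u' s) (K u t) < eps / 5.
  { apply k3 => //; try lra. move=> i; have := l2 i; lra. }
  have P1 := d_pos hd (G1 u' s) (G1 u t).
  have P2 := d_pos hd (G2 u' s) (G2 u t).
  have P3 := d_pos hd (K u' s) (K u t).
  cbv beta. destruct (Rle_dec (p u' s) (q u' s)) as [c1|c1];
  destruct (Rle_dec (p u t) (q u t)) as [c2|c2].
  all: cbn [is_left].
  - lra.
  - have E1 : G1 u t = K u t by apply e1 => //; lra.
    have E2 : G2 u' s = K u' s by apply e2.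
    have t1 := d_tri hd (G1 u' s) (G1 u t) (G2 u t).
    have t2 := d_tri hd (K u t) (K u' s) (G2 u t).
    have q1 : d (G1 u t) (G2 u t) = d (K u t) (G2 u t) by rewrite E1.
    have q2 : d (K u' s) (G2 u t) = d (G2 u' s) (G2 u t) by rewrite E2.
    rewrite (d_sym hd (K u t) (K u' s)) in t2. lra.
  - have E1 : G2 u t = K u t by apply e2.
    have E2 : G1 u' s = K u' s by apply e1 => //; lra.
    have t1 := d_tri hd (G2 u' s) (G2 u t) (G1 u t).
    have t2 := d_tri hd (K u t) (K u' s) (G1 u t).
    have q1 : d (G2 u t) (G1 u t) = d (K u t) (G1 u t) by rewrite E1.
    have q2 : d (K u' s) (G1 u t) = d (G1 u' s) (G1 u t) by rewrite E2.
    rewrite (d_sym hd (K u t) (K u' s)) in t2. lra.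
  - lra.
Qed.

Definition upd {n} (i0 : 'I_n) (t : 'I_n -> R) (v : R) : 'I_n -> R :=
  fun i => if i == i0 then v else t i.

Lemma upd_at n (i0 : 'I_n) t v : upd i0 t v i0 = v.
Proof. by rewrite /upd eqxx. Qed.
Lemma upd_ne n (i0 : 'I_n) t v i : i != i0 -> upd i0 t v i = t i.
Proof. by rewrite /upd => /negbTE ->. Qed.
Lemma upd_upd n (i0 : 'I_n) t v w : upd i0 (upd i0 t v) w = upd i0 t w.
Proof. apply functional_extensionality => i. rewrite /upd. by case: (i == i0). Qed.
Lemma upd_same n (i0 : 'I_n) t : upd i0 t (t i0) = t.
Proof. apply functional_extensionality => i. rewrite /upd. by case: eqP => [->|]. Qed.
Lemma cube_upd n (i0 : 'I_n) t v : cube t -> 0 <= v <= 1 -> cube (upd i0 t v).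
Proof. move=> ht hv i. rewrite /upd. by case: (i == i0). Qed.
Lemma bd_upd01 n (i0 : 'I_n) t v : cube t -> v = 0 \/ v = 1 -> boundary (upd i0 t v).
Proof.
  move=> ht hv. split. apply cube_upd => //; lra. exists i0. by rewrite upd_at.
Qed.
Lemma bd_upd n (i0 : 'I_n) t v : boundary t -> 0 <= v <= 1 ->
  (t i0 = 0 \/ t i0 = 1 -> v = 0 \/ v = 1) -> boundary (upd i0 t v).
Proof.
  move=> [ht [j hj]] hv himp. case: (eqVneq j i0) => [E|ne].
  - subst j. by apply bd_upd01 => //; apply himp.
  - split; first by apply cube_upd. exists j. by rewrite upd_ne.
Qed.
Lemma lip_upd n (i0 : 'I_n) t s v v' k L : 0 < k -> 1 <= L ->
  Rabs (v' - v) < L * k -> (forall i, Rabs (s i - t i) < k) ->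
  forall i, Rabs (upd i0 s v' i - upd i0 t v i) < L * k.
Proof.
  move=> hk hL hv hs i. rewrite /upd. case: (i == i0) => //.
  have := hs i. nra.
Qed.

Lemma concat_eq {X} n (i0 : 'I_n) (f g : ('I_n -> R) -> X) t :
  concat i0 f g t = if Rle_dec (t i0) (1/2) then f (upd i0 t (2 * t i0))
                    else g (upd i0 t (2 * t i0 - 1)).
Proof.
  rewrite /concat. destruct Rle_dec; cbn [is_left]; f_equal; apply functional_extensionality => i;
  rewrite /upd; by case: eqP => [->|].
Qed.

Lemma zero_bd n (i0 : 'I_n) : boundary (fun _ : 'I_n => 0).
Proof. split. move=> i; lra. exists i0; by left. Qed.

Lemma concat_HC {X} (d : X -> X -> R) (hd : is_metric d) n (i0 : 'I_n) (x0 : X)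
  (A C : R -> ('I_n -> R) -> X) :
  HC d A -> HC d C ->
  (forall u t, 0 <= u <= 1 -> boundary t -> A u t = x0) ->
  (forall u t, 0 <= u <= 1 -> boundary t -> C u t = x0) ->
  HC d (fun u t => concat i0 (A u) (C u) t).
Proof.
  move=> hA hC bA bC.
  apply HC_ext with (F := fun u t => if Rle_dec (t i0) (1/2)
     then A u (upd i0 t (clamp (2 * t i0))) else C u (upd i0 t (clamp (2 * t i0 - 1)))).
  { move=> u t hu ht. rewrite concat_eq. have := ht i0.
    destruct Rle_dec; cbn [is_left] => h; rewrite clamp_id //; lra. }
  apply (@glue X d hd n (fun u t => t i0) (fun _ _ => 1/2) _ _ (fun _ _ => x0)).
  - apply (@HC_comp X d n A (fun u _ => u) (fun u t => upd i0 t (clamp (2 * t i0))) 2) => //; first lra.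
    + move=> u t hu ht. split => //. apply cube_upd => //. apply clamp_rng.
    + move=> k u t u' s hk hu ht hu' hs l1 l2. split; first lra.
      apply lip_upd => //; try lra. apply clamp_lip. have := l2 i0. split_Rabs; lra.
  - apply (@HC_comp X d n C (fun u _ => u) (fun u t => upd i0 t (clamp (2 * t i0 - 1))) 2) => //; first lra.
    + move=> u t hu ht. split => //. apply cube_upd => //. apply clamp_rng.
    + move=> k u t u' s hk hu ht hu' hs l1 l2. split; first lra.
      apply lip_upd => //; try lra. apply clamp_lip. have := l2 i0. split_Rabs; lra.
  - by apply HC_const.
  - move=> u t hu ht h. apply bA => //. rewrite clamp_1; last lra. apply bd_upd01 => //; by right.
  - move=> u t hu ht h. apply bC => //. rewrite clamp_0; last lra. apply bd_upd01 => //; by left.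
Qed.

Lemma concat_bd {X} n (i0 : 'I_n) (x0 : X) (f g : ('I_n -> R) -> X) t :
  (forall t, boundary t -> f t = x0) -> (forall t, boundary t -> g t = x0) ->
  boundary t -> concat i0 f g t = x0.
Proof.
  move=> bf bg bt. have ht := bt.1. have := ht i0. rewrite concat_eq. destruct Rle_dec; cbn [is_left] => h.
  - apply bf. apply bd_upd => //; lra.
  - apply bg. apply bd_upd => //; lra.
Qed.

Lemma concat_ext {X} n (i0 : 'I_n) (f f' g g' : ('I_n -> R) -> X) t :
  (forall t, cube t -> f t = f' t) -> (forall t, cube t -> g t = g' t) ->
  cube t -> concat i0 f g t = concat i0 f' g' t.
Proof.
  move=> ef eg ht. have := ht i0. rewrite !concat_eq. destruct Rle_dec; cbn [is_left] => h.
  - apply ef. apply cube_upd => //; lra.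
  - apply eg. apply cube_upd => //; lra.
Qed.

Lemma Omega_concat {X} (d : X -> X -> R) (hd : is_metric d) n (i0 : 'I_n) (x0 : X) f g :
  Omega d x0 f -> Omega d x0 g -> Omega d x0 (concat i0 f g).
Proof.
  move=> [cf bf] [cg bg]. split.
  - apply (@HC_at X d n (fun _ t => concat i0 f g t) 0); first lra.
    apply (@concat_HC X d hd n i0 x0 (fun _ => f) (fun _ => g)).
    + by apply HC_lift. + by apply HC_lift. + move=> *; by apply bf. + move=> *; by apply bg.
  - move=> t bt. by apply concat_bd.
Qed.

Definition grev {X} {n} (i0 : 'I_n) (g : ('I_n -> R) -> X) : ('I_n -> R) -> X :=
  fun t => g (upd i0 t (1 - t i0)).

Lemma Omega_rev {X} (d : X -> X -> R) (hd : is_metric d) n (i0 : 'I_n) (x0 : X) g :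
  Omega d x0 g -> Omega d x0 (grev i0 g).
Proof.
  move=> [cg bg]. split.
  - apply (@HC_at X d n (fun _ t => grev i0 g t) 0); first lra.
    apply (@HC_comp X d n (fun _ => g) (fun u _ => u) (fun u t => upd i0 t (1 - t i0)) 1); first lra.
    + by apply HC_lift.
    + move=> u t hu ht. split => //. apply cube_upd => //. have := ht i0; lra.
    + move=> k u t u' s hk hu ht hu' hs l1 l2. split; first lra.
      apply lip_upd => //; try lra. have := l2 i0. split_Rabs; lra.
  - move=> t bt. apply bg. apply bd_upd => //. have := bt.1 i0; lra. lra.
Qed.

Lemma hom_concat_r {X} (d : X -> X -> R) (hd : is_metric d) n (i0 : 'I_n) (x0 : X) a1 a2 g :
  homotopic d x0 a1 a2 -> Omega d x0 g -> homotopic d x0 (concat i0 a1 g) (concat i0 a2 g).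
Proof.
  move=> [H [hH [h0 [h1 hb]]]] [cg bg].
  exists (fun u t => concat i0 (H u) g t). split; [|split; [|split]].
  - apply (@concat_HC X d hd n i0 x0 H (fun _ => g)) => //. by apply HC_lift.
    move=> *; by apply bg.
  - move=> t ht. apply concat_ext => //.
  - move=> t ht. apply concat_ext => //.
  - move=> u t hu bt. apply concat_bd => // *; by apply hb.
Qed.

Lemma hom_concat_l {X} (d : X -> X -> R) (hd : is_metric d) n (i0 : 'I_n) (x0 : X) a1 a2 g :
  homotopic d x0 a1 a2 -> Omega d x0 g -> homotopic d x0 (concat i0 g a1) (concat i0 g a2).
Proof.
  move=> [H [hH [h0 [h1 hb]]]] [cg bg].
  exists (fun u t => concat i0 g (H u) t). split; [|split; [|split]].
  - apply (@concat_HC X d hd n i0 x0 (fun _ => g) H) => //. by apply HC_lift.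
    move=> *; by apply bg.
  - move=> t ht. apply concat_ext => //.
  - move=> t ht. apply concat_ext => //.
  - move=> u t hu bt. apply concat_bd => // *; by apply hb.
Qed.

Lemma hom_trans {X} (d : X -> X -> R) (hd : is_metric d) n (x0 : X) (a b c : ('I_n -> R) -> X) :
  homotopic d x0 a b -> homotopic d x0 b c -> homotopic d x0 a c.
Proof.
  move=> [H1 [c1 [a1 [b1 e1]]]] [H2 [c2 [a2 [b2 e2]]]].
  exists (fun u t => if Rle_dec u (1/2) then H1 (clamp (2 * u)) t else H2 (clamp (2 * u - 1)) t).
  split; [|split; [|split]].
  - apply (@glue X d hd n (fun u _ => u) (fun _ _ => 1/2) _ _ (fun _ t => H1 1 t)).
    + apply (@HC_comp X d n H1 (fun u _ => clamp (2 * u)) (fun _ t => t) 2) => //; first lra.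
      * move=> u t hu ht. split => //. apply clamp_rng.
      * move=> k u t u' s hk hu ht hu' hs l1 l2. split.
        apply clamp_lip. split_Rabs; lra. move=> i. have := l2 i. lra.
    + apply (@HC_comp X d n H2 (fun u _ => clamp (2 * u - 1)) (fun _ t => t) 2) => //; first lra.
      * move=> u t hu ht. split => //. apply clamp_rng.
      * move=> k u t u' s hk hu ht hu' hs l1 l2. split.
        apply clamp_lip. split_Rabs; lra. move=> i. have := l2 i. lra.
    + apply HC_end => //; lra.
    + move=> u t hu ht h. rewrite clamp_1 //; lra.
    + move=> u t hu ht h. rewrite clamp_0; last lra. rewrite a2 // b1 //.
  - move=> t ht. destruct Rle_dec; cbn [is_left]; last lra.
    rewrite clamp_0; last lra. by apply a1.
  - move=> t ht. destruct Rle_dec; cbn [is_left]; first lra.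
    rewrite clamp_1; last lra. by apply b2.
  - move=> u t hu bt. destruct Rle_dec; cbn [is_left].
    + apply e1 => //. apply clamp_rng.
    + apply e2 => //. apply clamp_rng.
Qed.

Lemma mu_concat_r {X} (d : X -> X -> R) (hd : is_metric d) n (i0 : 'I_n) (x0 : X) a b g :
  (forall t, boundary t -> a t = x0) -> (forall t, boundary t -> b t = x0) ->
  mu d (concat i0 a g) (concat i0 b g) = mu d a b.
Proof.
  move=> ba bb. rewrite /mu. f_equal. apply Lub_Rbar_eqset => r. split.
  - move=> [t [ht ->]]. rewrite !concat_eq. have := ht i0.
    destruct Rle_dec; cbn [is_left] => h.
    + exists (upd i0 t (2 * t i0)). split => //. apply cube_upd => //; lra.
    + exists (fun _ => 0). have zb := zero_bd _ i0. split; first exact: zb.1.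
      rewrite ba // bb // !d_refl //.
  - move=> [t [ht ->]]. exists (upd i0 t (t i0 / 2)). have := ht i0 => h.
    split. apply cube_upd => //; lra.
    rewrite !concat_eq upd_at. destruct Rle_dec; cbn [is_left]; last lra.
    rewrite upd_upd. have -> : 2 * (t i0 / 2) = t i0 by field. by rewrite upd_same.
Qed.

Lemma mu_concat_l {X} (d : X -> X -> R) (hd : is_metric d) n (i0 : 'I_n) (x0 : X) a b g :
  (forall t, boundary t -> a t = x0) -> (forall t, boundary t -> b t = x0) ->
  mu d (concat i0 g a) (concat i0 g b) = mu d a b.
Proof.
  move=> ba bb. rewrite /mu. f_equal. apply Lub_Rbar_eqset => r. split.
  - move=> [t [ht ->]]. rewrite !concat_eq. have := ht i0.
    destruct Rle_dec; cbn [is_left] => h.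
    + exists (fun _ => 0). have zb := zero_bd _ i0. split; first exact: zb.1.
      rewrite ba // bb // !d_refl //.
    + exists (upd i0 t (2 * t i0 - 1)). split => //. apply cube_upd => //; lra.
  - move=> [t [ht ->]]. have := ht i0 => h.
    case: (Req_dec (t i0) 0) => h0.
    + exists (fun _ => 0). have zb := zero_bd _ i0. split; first exact: zb.1.
      have bt : boundary t by split => //; exists i0; left.
      rewrite ba // bb // d_refl //. rewrite !concat_eq. destruct Rle_dec; cbn [is_left]; last lra. by rewrite d_refl.
    + exists (upd i0 t ((t i0 + 1) / 2)).
      split. apply cube_upd => //; lra.
      rewrite !concat_eq upd_at. destruct Rle_dec; cbn [is_left]; first lra.
      rewrite upd_upd. have -> : 2 * ((t i0 + 1) / 2) - 1 = t i0 by field. by rewrite upd_same.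
Qed.

Lemma cancel_r {X} (d : X -> X -> R) (hd : is_metric d) n (i0 : 'I_n) (x0 : X) a g :
  Omega d x0 a -> Omega d x0 g ->
  homotopic d x0 (concat i0 (concat i0 a g) (grev i0 g)) a.
Proof.
  move=> [ca ba] [cg bg].
  exists (fun u t => if Rle_dec (t i0 * (4 - 3 * u)) 1
    then a (upd i0 t (clamp (t i0 * (4 - 3 * u))))
    else g (upd i0 t (clamp (Rmin (t i0 * (4 - 3 * u) - 1) (2 - 2 * t i0))))).
  split; [|split; [|split]].
  - apply (@glue X d hd n (fun u t => t i0 * (4 - 3 * u)) (fun _ _ => 1) _ _ (fun _ _ => x0)).
    + apply (@HC_comp X d n (fun _ => a) (fun u _ => u)
        (fun u t => upd i0 t (clamp (t i0 * (4 - 3 * u)))) 7); first lra.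
      * by apply HC_lift.
      * move=> u t hu ht. split => //. apply cube_upd => //. apply clamp_rng.
      * move=> k u t u' s hk hu ht hu' hs l1 l2. split; first lra.
        apply lip_upd => //; try lra. apply clamp_lip. apply prod_lip => //.
    + apply (@HC_comp X d n (fun _ => g) (fun u _ => u)
        (fun u t => upd i0 t (clamp (Rmin (t i0 * (4 - 3 * u) - 1) (2 - 2 * t i0)))) 7); first lra.
      * by apply HC_lift.
      * move=> u t hu ht. split => //. apply cube_upd => //. apply clamp_rng.
      * move=> k u t u' s hk hu ht hu' hs l1 l2. split; first lra.
        apply lip_upd => //; try lra. apply clamp_lip. apply min_lip.
        -- have := @prod_lip (t i0) (s i0) u u' k (ht i0) (hs i0) hu hu' (l2 i0) l1. split_Rabs; lra.
        -- have := l2 i0. split_Rabs; lra.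
    + by apply HC_const.
    + move=> u t hu ht h. apply ba. rewrite clamp_1 //. apply bd_upd01 => //; by right.
    + move=> u t hu ht h. apply bg. rewrite clamp_0. apply bd_upd01 => //; by left.
      apply: Rle_trans; first apply Rmin_l. lra.
  - move=> t ht. have h := ht i0. rewrite !concat_eq /grev !upd_at !upd_upd.
    have -> : t i0 * (4 - 3 * 0) = 4 * t i0 by ring.
    repeat destruct Rle_dec; cbn [is_left]; try lra.
    + f_equal. f_equal. rewrite clamp_id; lra.
    + f_equal. f_equal. rewrite Rmin_left; try lra. rewrite clamp_id; lra.
    + f_equal. f_equal. rewrite Rmin_right; try lra. rewrite clamp_id; lra.
  - move=> t ht. have h := ht i0.
    have -> : t i0 * (4 - 3 * 1) = t i0 by ring.
    destruct Rle_dec; cbn [is_left]; last lra.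
    rewrite clamp_id // upd_same //.
  - move=> u t hu bt. have h := bt.1 i0. destruct Rle_dec; cbn [is_left].
    + apply ba. apply bd_upd => //. apply clamp_rng.
      move=> [E|E]; rewrite E; [left; apply clamp_0 | right; apply clamp_1]; nra.
    + apply bg. apply bd_upd => //. apply clamp_rng.
      move=> [E|E]; rewrite E; left; apply clamp_0;
      (apply: Rle_trans; [apply Rmin_l|nra]) || (apply: Rle_trans; [apply Rmin_r|nra]).
Qed.

Lemma cancel_l {X} (d : X -> X -> R) (hd : is_metric d) n (i0 : 'I_n) (x0 : X) a g :
  Omega d x0 a -> Omega d x0 g ->
  homotopic d x0 (concat i0 (grev i0 g) (concat i0 g a)) a.
Proof.
  move=> [ca ba] [cg bg].
  exists (fun u t => if Rle_dec ((1 - t i0) * (4 - 3 * u)) 1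
    then a (upd i0 t (1 - clamp ((1 - t i0) * (4 - 3 * u))))
    else g (upd i0 t (clamp (Rmax (2 - (1 - t i0) * (4 - 3 * u)) (1 - 2 * t i0))))).
  split; [|split; [|split]].
  - apply (@glue X d hd n (fun u t => (1 - t i0) * (4 - 3 * u)) (fun _ _ => 1) _ _ (fun _ _ => x0)).
    + apply (@HC_comp X d n (fun _ => a) (fun u _ => u)
        (fun u t => upd i0 t (1 - clamp ((1 - t i0) * (4 - 3 * u)))) 7); first lra.
      * by apply HC_lift.
      * move=> u t hu ht. split => //. apply cube_upd => //. have := clamp_rng ((1 - t i0) * (4 - 3 * u)); lra.
      * move=> k u t u' s hk hu ht hu' hs l1 l2. split; first lra.
        apply lip_upd => //; try lra.
        have h1 : 0 <= 1 - t i0 <= 1 by have := ht i0; lra.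
        have h2 : 0 <= 1 - s i0 <= 1 by have := hs i0; lra.
        have h3 : Rabs ((1 - s i0) - (1 - t i0)) < k by have := l2 i0; split_Rabs; lra.
        have := @clamp_lip _ _ _ (@prod_lip (1 - t i0) (1 - s i0) u u' k h1 h2 hu hu' h3 l1).
        split_Rabs; lra.
    + apply (@HC_comp X d n (fun _ => g) (fun u _ => u)
        (fun u t => upd i0 t (clamp (Rmax (2 - (1 - t i0) * (4 - 3 * u)) (1 - 2 * t i0)))) 7); first lra.
      * by apply HC_lift.
      * move=> u t hu ht. split => //. apply cube_upd => //. apply clamp_rng.
      * move=> k u t u' s hk hu ht hu' hs l1 l2. split; first lra.
        apply lip_upd => //; try lra. apply clamp_lip. apply max_lip.
        -- have h1 : 0 <= 1 - t i0 <= 1 by have := ht i0; lra.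
           have h2 : 0 <= 1 - s i0 <= 1 by have := hs i0; lra.
           have h3 : Rabs ((1 - s i0) - (1 - t i0)) < k by have := l2 i0; split_Rabs; lra.
           have := @prod_lip (1 - t i0) (1 - s i0) u u' k h1 h2 hu hu' h3 l1. split_Rabs; lra.
        -- have := l2 i0. split_Rabs; lra.
    + by apply HC_const.
    + move=> u t hu ht h. apply ba. apply bd_upd01 => //. left. rewrite clamp_1 //; lra.
    + move=> u t hu ht h. apply bg. rewrite clamp_1. apply bd_upd01 => //; by right.
      apply: Rle_trans; last apply Rmax_l. lra.
  - move=> t ht. have h := ht i0. rewrite !concat_eq /grev !upd_at !upd_upd.
    have -> : (1 - t i0) * (4 - 3 * 0) = 4 - 4 * t i0 by ring.
    repeat destruct Rle_dec; cbn [is_left]; try lra.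
    all: first
      [ solve [ rewrite ba; [rewrite bg //; apply bd_upd01 => //; right; lra
               | apply bd_upd01 => //; left; rewrite clamp_1; lra] ]
      | solve [ f_equal; f_equal; rewrite Rmax_right; try lra; rewrite clamp_id; lra ]
      | solve [ f_equal; f_equal; rewrite Rmax_left; try lra; rewrite clamp_id; lra ]
      | solve [ f_equal; f_equal; rewrite clamp_id; lra ] ].
  - move=> t ht. have h := ht i0.
    have -> : (1 - t i0) * (4 - 3 * 1) = 1 - t i0 by ring.
    destruct Rle_dec; cbn [is_left]; last lra.
    rewrite clamp_id; last lra. have -> : 1 - (1 - t i0) = t i0 by ring. rewrite upd_same //.
  - move=> u t hu bt. have h := bt.1 i0. destruct Rle_dec; cbn [is_left].
    + apply ba. apply bd_upd => //. have := clamp_rng ((1 - t i0) * (4 - 3 * u)); lra.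
      move=> [E|E]; rewrite E; [left; rewrite clamp_1 | right; rewrite clamp_0]; nra.
    + apply bg. apply bd_upd => //. apply clamp_rng.
      move=> [E|E]; rewrite E; right; apply clamp_1;
      (apply: Rle_trans; [|apply Rmax_l]; nra) || (apply: Rle_trans; [|apply Rmax_r]; nra).
Qed.

Theorem lemma4p3 (X : Type) (d : X -> X -> R) (x0 : X) (hd : is_metric d)
  (n : nat) (hn : (0 < n)%N)
  (alpha beta gamma : ('I_n -> R) -> X)
  (ha : Omega d x0 alpha) (hb : Omega d x0 beta) (hc : Omega d x0 gamma) :
  rho d x0 alpha beta
    = rho d x0 (concat (Ordinal hn) alpha gamma) (concat (Ordinal hn) beta gamma) /\
  rho d x0 alpha beta
    = rho d x0 (concat (Ordinal hn) gamma alpha) (concat (Ordinal hn) gamma beta).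
Proof.
  set i0 := Ordinal hn.
  have hr : Omega d x0 (grev i0 gamma) by apply: Omega_rev.
  split; rewrite /rho; apply Glb_Rbar_eqset => r; split.
  - move=> [a' [b' [oa [ob [ha' [hb' ->]]]]]].
    exists (concat i0 a' gamma), (concat i0 b' gamma).
    split; first by apply Omega_concat.
    split; first by apply Omega_concat.
    split; first by apply hom_concat_r.
    split; first by apply hom_concat_r.
    symmetry. apply mu_concat_r with (x0 := x0) => //. exact oa.2. exact ob.2.
  - move=> [a' [b' [oa [ob [ha' [hb' ->]]]]]].
    exists (concat i0 a' (grev i0 gamma)), (concat i0 b' (grev i0 gamma)).
    split; first by apply Omega_concat.
    split; first by apply Omega_concat.
    split. apply: hom_trans => //. apply: hom_concat_r => //. exact ha'. by apply cancel_r.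
    split. apply: hom_trans => //. apply: hom_concat_r => //. exact hb'. by apply cancel_r.
    symmetry. apply mu_concat_r with (x0 := x0) => //. exact oa.2. exact ob.2.
  - move=> [a' [b' [oa [ob [ha' [hb' ->]]]]]].
    exists (concat i0 gamma a'), (concat i0 gamma b').
    split; first by apply Omega_concat.
    split; first by apply Omega_concat.
    split; first by apply hom_concat_l.
    split; first by apply hom_concat_l.
    symmetry. apply mu_concat_l with (x0 := x0) => //. exact oa.2. exact ob.2.
  - move=> [a' [b' [oa [ob [ha' [hb' ->]]]]]].
    exists (concat i0 (grev i0 gamma) a'), (concat i0 (grev i0 gamma) b').
    split; first by apply Omega_concat.
    split; first by apply Omega_concat.
    split. apply: hom_trans => //. apply: hom_concat_l => //. exact ha'. by apply cancel_l.
    split. apply: hom_trans => //. apply: hom_concat_l => //. exact hb'. by apply cancel_l.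
    symmetry. apply mu_concat_l with (x0 := x0) => //. exact oa.2. exact ob.2.
Qed.
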